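(* In every state $\mathbf{x}$ of the common-chunk-protocol Markov process (with $k\ge 2$ chunks and any $\lambda>0$), for every chunk $i\in\{1,\dots,k\}$, \[ r \;\ge\; \frac{2\,\bar S_i^{\,3}\, S_i}{3\,S^3}. \]
   Context: Model: Fix an integer $k\ge 2$ (number of chunks of a file) and $\lambda>0$. There is always exactly one seed holding all $k$ chunks. Non-seed peers arrive according to a Poisson process of rate $\lambda$, each arriving with no chunks; each non-seed peer holds a subset (its profile) of $\{1,\dots,k\}$ and leaves the system immediately once it holds all $k$ chunks. The state $\mathbf{x}$ of the continuous-time Markov process is the number of non-seed peers with each profile. $S$ denotes the total number of peers present, including the seed. Each non-seed peer has an independent rate-1 Poisson clock; at each tick it draws a sample of peers independently and uniformly at random with replacement from the current $S$ peers (seed and itself included) and may instantaneously download at most one chunk that it lacks and that is held by some sampled peer (such a chunk is a ''match''). Counting draws with multiplicity, a chunk is ''rare'' in a sample of 3 draws if exactly one of the 3 draws holds it. Common chunk protocol: (i) a peer with no chunks draws 3 peers and downloads a chunk chosen uniformly among the rare matches, if there is any, otherwise nothing; (ii) a peer holding at least 1 and at most $k-2$ chunks draws 1 peer and downloads a uniformly chosen match, if any, otherwise nothing; (iii) a peer holding exactly $k-1$ chunks draws 3 peers and downloads its missing chunk only if that chunk is held by some draw and every chunk it holds is held by at least 2 of the 3 draws; otherwise nothing. Notation: $S_i$ ($1\le i\le k$) is the number of peers, including the seed, holding chunk $i$; $\bar S_i=S-S_i$. $r=r(\mathbf{x})$ is the total rate of download events in state $\mathbf{x}$, i.e. the sum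 over all non-seed peers of the probability that a clock tick of that peer results in a download. *)

(* Defs.v *)
From HB Require Import structures.
From mathcomp Require Import all_boot all_order all_algebra.
Set Implicit Arguments. Unset Strict Implicit. Unset Printing Implicit Defensive.
Import Order.TTheory GRing.Theory Num.Theory.

(* Chunks are 'I_k; a profile is a set {set 'I_k}.
   A state x : {set 'I_k} -> nat gives the number of NON-SEED peers with each
   profile (x setT = 0 is assumed, since complete peers leave).
   The seed is added separately, with profile setT. *)

Definition wgt (k : nat) (x : {set 'I_k} -> nat) (A : {set 'I_k}) : nat :=
  x A + (A == setT).

Definition Stot (k : nat) (x : {set 'I_k} -> nat) : nat :=
  \sum_(A : {set 'I_k}) wgt x A.

Definition Schunk (k : nat) (x : {set 'I_k} -> nat) (i : 'I_k) : nat :=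
  \sum_(A : {set 'I_k} | i \in A) wgt x A.

Definition Sbar (k : nat) (x : {set 'I_k} -> nat) (i : 'I_k) : nat :=
  Stot x - Schunk x i.

Definition nheld (k : nat) (B C D : {set 'I_k}) (j : 'I_k) : nat :=
  (j \in B) + (j \in C) + (j \in D).

Definition dl_empty (k : nat) (B C D : {set 'I_k}) : bool :=
  [exists j, nheld B C D j == 1%N].

Definition dl_last (k : nat) (A B C D : {set 'I_k}) : bool :=
  [exists j, (j \notin A) && (j \in B :|: C :|: D)] &&
  [forall j in A, 2 <= nheld B C D j].

(* probability that a clock tick of a peer with profile A yields a download *)
Definition dl_prob (R : realFieldType) (k : nat) (x : {set 'I_k} -> nat)
    (A : {set 'I_k}) : R :=
  (if A == set0 then
    (\sum_(B : {set 'I_k}) \sum_(C : {set 'I_k}) \sum_(D : {set 'I_k})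
       wgt x B * wgt x C * wgt x D * dl_empty B C D)%N%:R / ((Stot x) ^ 3)%N%:R
  else if (#|A| <= k - 2)%N then
    (\sum_(B : {set 'I_k} | ~~ (B \subset A)) wgt x B)%N%:R / (Stot x)%:R
  else if (#|A| == k - 1)%N then
    (\sum_(B : {set 'I_k}) \sum_(C : {set 'I_k}) \sum_(D : {set 'I_k})
       wgt x B * wgt x C * wgt x D * dl_last A B C D)%N%:R / ((Stot x) ^ 3)%N%:R
  else 0)%R.

Definition rate (R : realFieldType) (k : nat) (x : {set 'I_k} -> nat) : R :=
  (\sum_(A : {set 'I_k}) ((x A)%:R * dl_prob R x A)%R)%R.

(* Main.v *)
Require Import Defs.
From HB Require Import structures.
From mathcomp Require Import all_boot all_order all_algebra.
From mathcomp Require Import zify ring lra.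
Import Order.TTheory GRing.Theory Num.Theory.
Set Implicit Arguments. Unset Strict Implicit.

Lemma sum3 (T : finType) (f g h : T -> nat) :
  (\sum_B \sum_C \sum_D (f B * g C * h D) =
   (\sum_B f B) * (\sum_C g C) * (\sum_D h D))%N.
Proof.
rewrite -mulnA big_distrl /=.
apply: eq_bigr => B _.
rewrite mulnA [(f B * _)%N]big_distrr /= big_distrl /=; apply: eq_bigr => C _.
rewrite big_distrr /=; apply: eq_bigr => D _.
by [].
Qed.

Lemma sum3D (T : finType) (F G : T -> T -> T -> nat) :
  (\sum_B \sum_C \sum_D (F B C D + G B C D) =
   \sum_B \sum_C \sum_D F B C D + \sum_B \sum_C \sum_D G B C D)%N.
Proof.
rewrite -big_split; apply: eq_bigr => B _; rewrite -big_split.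
by apply: eq_bigr => C _; rewrite -big_split.
Qed.

Lemma sum3le (T : finType) (F G : T -> T -> T -> nat) :
  (forall B C D, F B C D <= G B C D)%N ->
  (\sum_B \sum_C \sum_D F B C D <= \sum_B \sum_C \sum_D G B C D)%N.
Proof.
move=> h; apply: leq_sum => B _; apply: leq_sum => C _; apply: leq_sum => D _; exact: h.
Qed.

Section S.
Variables (k : nat) (x : {set 'I_k} -> nat) (i : 'I_k).

Definition pp (B : {set 'I_k}) := (wgt x B * (i \in B))%N.
Definition qq (B : {set 'I_k}) := (wgt x B * (i \notin B))%N.
Definition Sb := (\sum_(A : {set 'I_k} | i \notin A) wgt x A)%N.

Lemma sum_pp : (\sum_B pp B = Schunk x i)%N.
Proof. rewrite /Schunk [RHS]big_mkcond; apply: eq_bigr => B _; rewrite /pp; by case: (i \in B); rewrite ?muln1 ?muln0. Qed.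
Lemma sum_qq : (\sum_B qq B = Sb)%N.
Proof. rewrite /Sb [RHS]big_mkcond; apply: eq_bigr => B _; rewrite /qq; by case: (i \in B); rewrite ?muln1 ?muln0. Qed.

Lemma Stot_split : Stot x = (Schunk x i + Sb)%N.
Proof. by rewrite /Stot (bigID (fun A : {set 'I_k} => i \in A)). Qed.

Lemma Sbar_eq : Sbar x i = Sb.
Proof. by rewrite /Sbar Stot_split addKn. Qed.

Lemma wgt_x (A : {set 'I_k}) : i \notin A -> wgt x A = x A.
Proof.
move=> hA; rewrite /wgt; case: eqP => [e|_]; last by rewrite addn0.
by move: hA; rewrite e in_setT.
Qed.

Lemma pt_empty (B C D : {set 'I_k}) :
  (pp B * qq C * qq D + qq B * pp C * qq D + qq B * qq C * pp D <=
   wgt x B * wgt x C * wgt x D * dl_empty B C D)%N.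
Proof.
have W : forall b c d : bool, (b + c + d = 1)%N -> i \in B = b -> i \in C = c -> i \in D = d -> dl_empty B C D.
  move=> b c d h hb hc hd; apply/existsP; exists i; by rewrite /nheld hb hc hd h.
rewrite /pp /qq.
case hB: (i \in B); case hC: (i \in C); case hD: (i \in D);
  rewrite /= ?muln0 ?mul0n ?muln1 ?addn0 ?add0n //;
  by rewrite (W _ _ _ _ hB hC hD) ?muln1.
Qed.

Lemma num_empty :
  (3 * Schunk x i * Sb ^ 2 <= \sum_B \sum_C \sum_D
       (wgt x B * wgt x C * wgt x D * dl_empty B C D))%N.
Proof.
apply: leq_trans (sum3le pt_empty).
rewrite !sum3D !sum3 sum_pp sum_qq; lia.
Qed.

Lemma num_mid (A : {set 'I_k}) : i \notin A ->
  (Schunk x i <= \sum_(B : {set 'I_k} | ~~ (B \subset A)) wgt x B)%N.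
Proof.
move=> hA; rewrite /Schunk [X in (_ <= X)%N]big_mkcond [X in (X <= _)%N]big_mkcond.
apply: leq_sum => B _; case hB: (i \in B) => //=.
rewrite (_ : ~~ (B \subset A) = true) //; apply/negP => /subsetP sub.
by move: (sub i hB); rewrite (negbTE hA).
Qed.

Definition uu (A B : {set 'I_k}) := (wgt x B * (B == A))%N.

Lemma dl_last_true (A B C D : {set 'I_k}) j : j \notin A -> j \in B :|: C :|: D ->
  (forall l, l \in A -> 2 <= nheld B C D l)%N -> dl_last A B C D.
Proof.
move=> h1 h2 h3; apply/andP; split; first by apply/existsP; exists j; rewrite h1 h2.
by apply/forallP => l; apply/implyP => /h3.
Qed.

Lemma pt_last (A B C D : {set 'I_k}) : i \notin A ->
  (uu A B * uu A C * pp D + uu A B * pp C * uu A D + pp B * uu A C * uu A D <=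
   wgt x B * wgt x C * wgt x D * dl_last A B C D)%N.
Proof.
move=> hA; have hA' : (i \in A) = false by apply: negbTE.
rewrite /uu /pp.
case: (eqVneq B A) => [->|nB]; case: (eqVneq C A) => [->|nC];
  case: (eqVneq D A) => [->|nD];
  rewrite ?eqxx ?(negbTE nB) ?(negbTE nC) ?(negbTE nD) ?hA' /= ?muln0 ?mul0n ?addn0 ?add0n //.
- case hD: (i \in D); rewrite ?muln0 // muln1.
  rewrite (_ : dl_last _ _ _ _ = true) ?muln1 //.
  apply: (dl_last_true (j := i)) => //; first by rewrite !in_setU hD orbT.
  by move=> l hl; rewrite /nheld hl.
- case hC: (i \in C); rewrite ?muln0 // muln1.
  rewrite (_ : dl_last _ _ _ _ = true) ?muln1 //.
  apply: (dl_last_true (j := i)) => //; first by rewrite !in_setU hC orbT.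
  by move=> l hl; rewrite /nheld hl /=; lia.
- case hB: (i \in B); rewrite ?muln0 // muln1.
  rewrite (_ : dl_last _ _ _ _ = true) ?muln1 //.
  apply: (dl_last_true (j := i)) => //; first by rewrite !in_setU hB.
  by move=> l hl; rewrite /nheld hl /=; lia.
Qed.

Lemma num_last (A : {set 'I_k}) : i \notin A ->
  (3 * x A ^ 2 * Schunk x i <= \sum_B \sum_C \sum_D
       (wgt x B * wgt x C * wgt x D * dl_last A B C D))%N.
Proof.
move=> hA; apply: leq_trans (sum3le (fun B C D => pt_last B C D hA)).
have su : (\sum_B uu A B = x A)%N.
  rewrite (bigD1 A) //= big1 ?addn0; first by rewrite /uu eqxx muln1 wgt_x.
  by move=> B /negbTE nB; rewrite /uu nB muln0.
rewrite !sum3D !sum3 sum_pp su; lia.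
Qed.

End S.
Unset Implicit Arguments.
Local Open Scope ring_scope.
Theorem mainTheorem3 (R : realFieldType) (k : nat) (hk : (2 <= k)%N)
    (lam : R) (hlam : 0 < lam)
    (x : {set 'I_k} -> nat) (hx : x setT = 0%N) (i : 'I_k) :
  2 * (Sbar x i)%:R ^+ 3 * (Schunk x i)%:R / (3 * (Stot x)%:R ^+ 3)
    <= rate R x.
Proof.
have hS1 : (1 <= Schunk x i)%N.
  rewrite /Schunk (bigD1 setT) ?in_setT //= /wgt eqxx; lia.
set a : R := (Schunk x i)%:R.
set b : R := (Sb x i)%:R.
set S : R := (Stot x)%:R.
have ha : 1 <= a by rewrite /a ler1n.
have hb : 0 <= b by [].
have hSab : S = a + b by rewrite /S (Stot_split x i) natrD.
have hS : 0 < S by rewrite hSab; lra.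
have hS3 : 0 < S ^+ 3 by rewrite exprn_gt0.
have hS3n : S ^+ 3 != 0 by rewrite gt_eqF.
set A0 : {set 'I_k} := [set~ i].
have hiA0 : i \notin A0 by rewrite !inE eqxx.
have cA0 : #|A0| = k.-1 by rewrite cardsC1 card_ord.
set m : R := (x A0)%:R.
have P0 : forall A, 0 <= dl_prob R x A.
  move=> A; rewrite /dl_prob.
  case: ifP => _; first by apply: divr_ge0.
  case: ifP => _; first by apply: divr_ge0.
  case: ifP => _; first by apply: divr_ge0.
  by [].
have Pe : 3 * a * b ^+ 2 <= dl_prob R x set0 * S ^+ 3.
  rewrite /dl_prob eqxx natrX -/S divfK //.
  rewrite /a /b -natrX -(natrM R 3) -natrM ler_nat; exact: num_empty.
have Pm : forall A, A != set0 -> (#|A| <= k - 2)%N -> i \notin A ->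
    a * b ^+ 2 <= dl_prob R x A * S ^+ 3.
  move=> A h0 h1 h2; rewrite /dl_prob (negbTE h0) h1 -/S.
  have hN := num_mid x h2.
  set N := (\sum_(B | _) _)%N in hN *.
  have : a <= N%:R by rewrite ler_nat.
  have hbS : b <= S by rewrite hSab; lra.
  move=> haN.
  have -> : N%:R / S * S ^+ 3 = N%:R * S ^+ 2.
    by field; rewrite gt_eqF.
  have hb2 : b ^+ 2 <= S ^+ 2 by rewrite ler_pXn2r // ?nnegrE //; lra.
  have hb0 : 0 <= b ^+ 2 by apply: sqr_ge0.
  nra.
have Pl : 3 * m ^+ 2 * a <= dl_prob R x A0 * S ^+ 3.
  have n0 : A0 != set0 by apply/eqP => e; move: cA0; rewrite e cards0; lia.
  have n1 : (#|A0| <= k - 2)%N = false by rewrite cA0; lia.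
  have n2 : (#|A0| == k - 1)%N by rewrite cA0; lia.
  rewrite /dl_prob (negbTE n0) n1 n2 natrX -/S divfK //.
  rewrite /a /m -natrX -(natrM R 3) -natrM ler_nat; exact: num_last.
have class : forall A : {set 'I_k}, i \notin A -> A != A0 ->
    a * b ^+ 2 <= dl_prob R x A * S ^+ 3.
  move=> A hA nA.
  case: (eqVneq A set0) => [->|h0].
    apply: le_trans Pe; rewrite -mulrA; nra.
  apply: Pm => //.
  rewrite leqNgt; apply/negP => hc.
  move/negP: nA; apply; rewrite eqEcard cA0; apply/andP; split.
    by apply/subsetP => j hj; rewrite !inE; apply: contra hA => /eqP <-.
  move: hc; rewrite -subn1; move: #|A| => c; lia.
rewrite (Sbar_eq x i) -/b ler_pdivrMr; last by rewrite pmulr_rgt0.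
pose Q A := (x A)%:R * (dl_prob R x A * S ^+ 3).
have hr : rate R x * S ^+ 3 = \sum_A Q A.
  by rewrite /rate mulr_suml; apply: eq_bigr => A _; rewrite /Q mulrA.
have h1 : \sum_(A : {set 'I_k} | i \notin A) Q A <= rate R x * S ^+ 3.
  rewrite hr [X in _ <= X](bigID (fun A : {set 'I_k} => i \in A)) /=.
  apply: ler_wpDl; last by [].
  apply: sumr_ge0 => A _; rewrite /Q; apply: mulr_ge0 => //.
  by apply: mulr_ge0; [apply: P0 | apply: ltW].
rewrite (bigD1 A0) //= in h1.
set rest := \sum_(A : {set 'I_k} | (i \notin A) && (A != A0)) Q A in h1.
have h2 : (\sum_(A : {set 'I_k} | (i \notin A) && (A != A0)) (x A)%:R) * (a * b ^+ 2) <= rest.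
  rewrite mulr_suml; apply: ler_sum => A /andP[hA nA].
  by apply: ler_wpM2l => //; apply: class.
have hSb : Sb x i = (x A0 + \sum_(A : {set 'I_k} | (i \notin A) && (A != A0)) x A)%N.
  rewrite /Sb (bigD1 A0) //= (wgt_x x hiA0); congr addn.
  by apply: eq_bigr => A /andP[hA _]; apply: (wgt_x x hA).
have h3 : \sum_(A : {set 'I_k} | (i \notin A) && (A != A0)) ((x A)%:R : R) = b - m.
  by rewrite /b hSb natrD -natr_sum /m; ring.
rewrite h3 in h2.
have hm : 0 <= m by [].
have h4 : m * (3 * m ^+ 2 * a) <= Q A0 by rewrite /Q; apply: ler_wpM2l.
have hmb : m <= b by rewrite /b /m hSb ler_nat leq_addr.
set d := b - m.
have hd : 0 <= d by rewrite /d subr_ge0.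
have hpoly : 0 <= (d - m) ^+ 2 * (d + 2 * m) by apply: mulr_ge0; [apply: sqr_ge0 | lra].
have hbd : b = m + d by rewrite /d; ring.
rewrite hbd in h2 *.
have key : 0 <= a * ((m + d) ^+ 3 - 3 * m * (m + d) ^+ 2 + 9 * m ^+ 3).
  apply: mulr_ge0; first lra.
  have -> : (m + d) ^+ 3 - 3 * m * (m + d) ^+ 2 + 9 * m ^+ 3 =
            (d - m) ^+ 2 * (d + 2 * m) + 5 * m ^+ 3 by ring.
  by apply: addr_ge0 => //; apply: mulr_ge0 => //; apply: exprn_ge0.
set T := rate R x * S ^+ 3 in h1.
have -> : rate R x * (3 * S ^+ 3) = 3 * T by rewrite /T; ring.
have e1 : 2 * (m + d) ^+ 3 * a =
  3 * (m * (3 * m ^+ 2 * a) + d * (a * (m + d) ^+ 2)) - a * ((m + d) ^+ 3 - 3 * m * (m + d) ^+ 2 + 9 * m ^+ 3).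
  rewrite /d; ring.
rewrite e1; lra.
Qed.
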